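(* Let $\mathcal F_{\mathbb I}$ be the set of structure functions of the weakly flattened unit interval $\mathbb I$. Then $$\mathcal F_{\mathbb I}=\Big\{f\in\mathcal F_I \;:\; \lim_{t\to0^+}\tfrac{d^n}{dt^n}f(t)=0 \text{ and } \lim_{t\to1^-}\tfrac{d^n}{dt^n}f(t)=0 \text{ for all } n\ge1\Big\}.$$ That is, the generating set of $\mathbb I$ is already the full set of its structure functions, and every structure function on $\mathbb I$ has all derivatives of order $\ge1$ tending to $0$ at both endpoints.
   Context: A Frölicher space is a triple $(X,\mathcal C_X,\mathcal F_X)$ with $\mathcal C_X\subseteq X^{\mathbb R}$ and $\mathcal F_X\subseteq\mathbb R^X$ such that $\mathcal F_X=\{f:X\to\mathbb R\mid f\circ c\in C^\infty(\mathbb R,\mathbb R)\ \forall c\in\mathcal C_X\}$ and $\mathcal C_X=\{c:\mathbb R\to X\mid f\circ c\in C^\infty(\mathbb R,\mathbb R)\ \forall f\in\mathcal F_X\}$. Elements of $\mathcal C_X$ are called structure curves and elements of $\mathcal F_X$ structure functions. The structure generated by a set $F_0\subseteq\mathbb R^X$ has $\mathcal C_X=\{c\mid f\circ c\in C^\infty\ \forall f\in F_0\}$ and $\mathcal F_X=\{f\mid f\circ c\in C^\infty\ \forall c\in\mathcal C_X\}$. The space $I$ is $[0,1]$ with the subspace structure from $\mathbb R$: its structure curves are the maps $\mathbb R\to[0,1]$ that are $C^\infty$ as real-valued functions, and $\mathcal F_I$ is the corresponding set of structure functions. The weakly flattened unit interval $\mathbb I$ is the set $[0,1]$ with the structure generated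 by $F=\{f\in\mathcal F_I\mid \lim_{t\to0^+}f^{(n)}(t)=0=\lim_{t\to1^-}f^{(n)}(t)\ \forall n\ge1\}$. *)

(* Defs.v *)
From Stdlib Require Import Reals.
Open Scope R_scope.

Definition smooth (g : R -> R) : Prop :=
  exists d : nat -> R -> R,
    (forall x, d 0%nat x = g x) /\
    (forall n x, derivable_pt_lim (d n) x (d (S n) x)).

Definition I01 : Type := { x : R | 0 <= x <= 1 }.

(** Structure curves of I (subspace structure from R). *)
Definition curve_I (c : R -> I01) : Prop :=
  smooth (fun t => proj1_sig (c t)).

Definition F_I (f : I01 -> R) : Prop :=
  forall c : R -> I01, curve_I c -> smooth (fun t => f (c t)).

Definition ext (f : I01 -> R) (x : R) : R :=
  match Rle_dec 0 x, Rle_dec x 1 with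
  | left h0, left h1 => f (exist _ x (conj h0 h1))
  | right _, _ => f (exist _ 0 (conj (Rle_refl 0) Rle_0_1))
  | left _, right _ => f (exist _ 1 (conj Rle_0_1 (Rle_refl 1)))
  end.

Definition open01 (t : R) : Prop := 0 < t < 1.

(** f's derivatives of every order n >= 1 on the open interval (0,1)
    tend to 0 as t -> 0+ and t -> 1-.  The family d is the family of
    derivatives of f on (0,1) (unique there). *)
Definition flat_ends (f : I01 -> R) : Prop :=
  exists d : nat -> R -> R,
    (forall t, open01 t -> d 0%nat t = ext f t) /\
    (forall n t, open01 t -> derivable_pt_lim (d n) t (d (S n) t)) /\
    (forall n, (1 <= n)%nat ->
       limit1_in (d n) open01 0 0 /\ limit1_in (d n) open01 0 1).

Definition F_gen (f : I01 -> R) : Prop := F_I f /\ flat_ends f.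

Definition curve_II (c : R -> I01) : Prop :=
  forall g, F_gen g -> smooth (fun t => g (c t)).

Definition F_II (f : I01 -> R) : Prop :=
  forall c, curve_II c -> smooth (fun t => f (c t)).

(* Main.v *)
Require Import Defs.
From Stdlib Require Import Reals Lra Lia ProofIrrelevance.
Open Scope R_scope.

Lemma ext_val (g : I01 -> R) x (h : 0 <= x <= 1) : ext g x = g (exist _ x h).
Proof.
  unfold ext. destruct (Rle_dec 0 x) as [h0|h0], (Rle_dec x 1) as [h1|h1]; try (exfalso; lra).
  assert (E : conj h0 h1 = h) by apply proof_irrelevance. rewrite E. reflexivity.
Qed.

Lemma ext_proj (g : I01 -> R) (y : I01) : g y = ext g (proj1_sig y).
Proof. destruct y as [x h]; simpl. rewrite (ext_val g x h). reflexivity. Qed.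

Lemma ext_left g x : x <= 0 -> ext g x = g (exist _ 0 (conj (Rle_refl 0) Rle_0_1)).
Proof.
  intros H. destruct (Rle_lt_or_eq_dec _ _ H) as [H'|H'].
  - unfold ext. destruct (Rle_dec 0 x); [exfalso; lra|]. destruct (Rle_dec x 1); reflexivity.
  - subst. apply ext_val.
Qed.

Lemma ext_right g x : 1 <= x -> ext g x = g (exist _ 1 (conj Rle_0_1 (Rle_refl 1))).
Proof.
  intros H. destruct (Rle_lt_or_eq_dec _ _ H) as [H'|H'].
  - unfold ext. destruct (Rle_dec 0 x); [|exfalso; lra]. destruct (Rle_dec x 1); [exfalso; lra|reflexivity].
  - subst. apply ext_val.
Qed.

Definition clampR t := Rmax 0 (Rmin t 1).
Lemma clampR_in t : 0 <= clampR t <= 1.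
Proof. unfold clampR. split; [apply Rmax_l|]. apply Rmax_lub; [lra|apply Rmin_r]. Qed.
Definition cl (t : R) : I01 := exist _ (clampR t) (clampR_in t).

Lemma cl_ext g t : g (cl t) = ext g t.
Proof.
  rewrite ext_proj. simpl. unfold clampR.
  destruct (Rle_dec t 0).
  - rewrite Rmin_left by lra. rewrite Rmax_left by lra.
    rewrite !ext_left by lra. reflexivity.
  - destruct (Rle_dec t 1).
    + rewrite Rmin_left by lra. rewrite Rmax_right by lra. reflexivity.
    + rewrite Rmin_right by lra. rewrite Rmax_right by lra.
      rewrite !ext_right by lra. reflexivity.
Qed.

Lemma loc_deriv (F G : R -> R) x l d : 0 < d ->
  (forall y, Rabs (y - x) < d -> F y = G y) ->
  derivable_pt_lim G x l -> derivable_pt_lim F x l.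
Proof.
  intros Hd He HG eps Heps. destruct (HG eps Heps) as [del Hdel].
  assert (Hm : 0 < Rmin del d) by (apply Rmin_pos; [apply cond_pos|lra]).
  exists (mkposreal _ Hm). intros h Hh0 Hh. simpl in Hh.
  rewrite (He (x+h)), (He x).
  - apply Hdel; auto. apply Rlt_le_trans with (1:=Hh), Rmin_l.
  - rewrite Rminus_diag, Rabs_R0; lra.
  - replace (x + h - x) with h by ring. apply Rlt_le_trans with (1:=Hh), Rmin_r.
Qed.

Lemma loc_const (F : R -> R) x c d : 0 < d ->
  (forall y, Rabs (y - x) < d -> F y = c) -> derivable_pt_lim F x 0.
Proof.
  intros Hd He. apply (loc_deriv F (fct_cte c) x 0 d Hd); [exact He|].
  apply derivable_pt_lim_const.
Qed.

Lemma lim_cont (F : R -> R) a :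
  (forall eps, 0 < eps -> exists eta, 0 < eta /\ forall x, Rabs (x - a) < eta -> Rabs (F x - F a) < eps) ->
  continuity_pt F a.
Proof.
  intros H eps Heps. destruct (H eps Heps) as [eta [He Hx]].
  exists eta. split; [lra|]. intros x [_ Hxa]. apply Hx. exact Hxa.
Qed.

Lemma cont_lim (F : R -> R) a : continuity_pt F a ->
  forall eps, 0 < eps -> exists eta, 0 < eta /\ forall x, Rabs (x - a) < eta -> Rabs (F x - F a) < eps.
Proof.
  intros H eps Heps. destruct (H eps Heps) as [eta [He Hx]].
  exists eta. split; [lra|]. intros x Hxa.
  destruct (Req_dec x a) as [->|Hne].
  - rewrite Rminus_diag, Rabs_R0; lra.
  - apply (Hx x). split; [split; [exact I| auto]|exact Hxa].
Qed.

Lemma dlim_cont F x l : derivable_pt_lim F x l -> continuity_pt F x.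
Proof. intros H. apply derivable_continuous_pt. exists l. exact H. Qed.

Lemma mvt_bound F F' a b M : a < b -> continuity_pt F a -> continuity_pt F b ->
  (forall x, a < x < b -> derivable_pt_lim F x (F' x)) ->
  (forall x, a < x < b -> Rabs (F' x) <= M) -> Rabs (F b - F a) <= M * (b - a).
Proof.
  intros Hab Ca Cb HD HM.
  assert (pr1 : forall c, a < c < b -> derivable_pt F c) by (intros c Hc; exists (F' c); apply HD; auto).
  assert (pr2 : forall c, a < c < b -> derivable_pt id c) by (intros c Hc; exists 1; apply derivable_pt_lim_id).
  destruct (MVT F id a b pr1 pr2 Hab) as [c [P Hc]].
  - intros c [H1 H2]. destruct (Rle_lt_or_eq_dec _ _ H1) as [H1'|E1]; [|subst c; exact Ca].
    destruct (Rle_lt_or_eq_dec _ _ H2) as [H2'|E2]; [|subst c; exact Cb].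
    apply (dlim_cont F c (F' c)). apply HD; auto.
  - intros c _. apply derivable_continuous_pt. exists 1. apply derivable_pt_lim_id.
  - rewrite (derive_pt_eq_0 F c (F' c) (pr1 c P) (HD c P)) in Hc.
    rewrite (derive_pt_eq_0 id c 1 (pr2 c P) (derivable_pt_lim_id c)) in Hc.
    unfold id in Hc. rewrite Rmult_1_r in Hc. rewrite <- Hc.
    rewrite Rabs_mult, Rabs_right by lra. rewrite Rmult_comm.
    apply Rmult_le_compat_r; [lra|]. apply HM; auto.
Qed.

Lemma flat_point F F' a d : 0 < d -> continuity_pt F a ->
  (forall x, 0 < Rabs (x - a) < d -> derivable_pt_lim F x (F' x)) ->
  (forall eps, 0 < eps -> exists eta, 0 < eta /\ forall x, 0 < Rabs (x - a) < eta -> Rabs (F' x) < eps) ->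
  derivable_pt_lim F a 0.
Proof.
  intros Hd Ca HD HL eps Heps.
  destruct (HL (eps/2)) as [eta [He Hx]]; [lra|].
  assert (Hm : 0 < Rmin eta d) by (apply Rmin_pos; lra).
  exists (mkposreal _ Hm). intros h Hh0 Hh. simpl in Hh.
  assert (Hh1 : Rabs h < eta) by (apply Rlt_le_trans with (1:=Hh), Rmin_l).
  assert (Hh2 : Rabs h < d) by (apply Rlt_le_trans with (1:=Hh), Rmin_r).
  assert (Hb : Rabs (F (a + h) - F a) <= eps/2 * Rabs h).
  { destruct (Rlt_or_le 0 h) as [hp|hn].
    - assert (E: Rabs h = h) by (apply Rabs_right; lra). rewrite E in Hh, Hh1, Hh2 |- *.
      replace h with (a + h - a) at 2 by ring.
      apply mvt_bound with F'.
      + lra.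
      + exact Ca.
      + apply (dlim_cont F _ (F' (a+h))). apply HD. replace (a+h-a) with h by ring. rewrite Rabs_right; lra.
      + intros x Hx'. apply HD. rewrite Rabs_right; lra.
      + intros x Hx'. left. apply Hx. rewrite Rabs_right; lra.
    - assert (hneg : h < 0) by (destruct hn; auto; contradiction).
      assert (E: Rabs h = - h) by (apply Rabs_left; lra). rewrite E in Hh, Hh1, Hh2 |- *.
      rewrite Rabs_minus_sym. replace (- h) with (a - (a + h)) by ring.
      apply mvt_bound with F'.
      + lra.
      + apply (dlim_cont F _ (F' (a+h))). apply HD. replace (a+h-a) with h by ring. rewrite Rabs_left; lra.
      + exact Ca.
      + intros x Hx'. apply HD. rewrite Rabs_left; lra.
      + intros x Hx'. left. apply Hx. rewrite Rabs_left; lra. }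
  rewrite Rminus_0_r. unfold Rdiv. rewrite Rabs_mult, Rabs_inv.
  assert (0 < Rabs h) by (apply Rabs_pos_lt; auto).
  apply Rle_lt_trans with (eps/2 * Rabs h * / Rabs h).
  - apply Rmult_le_compat_r; [left; apply Rinv_0_lt_compat; auto|exact Hb].
  - field_simplify; lra.
Qed.

Lemma affine_deriv F x l a b : derivable_pt_lim F x l ->
  derivable_pt_lim (fun t => a + b * F t) x (b * l).
Proof.
  intros H. replace (b * l) with (0 + b * l) by ring.
  apply (derivable_pt_lim_plus (fct_cte a) (mult_real_fct b F)).
  - apply derivable_pt_lim_const.
  - apply derivable_pt_lim_scal. exact H.
Qed.

Definition ec (n : nat) (t : R) := cos (t + INR n * (PI/2)).

Lemma ec_deriv n t : derivable_pt_lim (ec n) t (ec (S n) t).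
Proof.
  unfold ec. rewrite S_INR.
  replace (cos (t + (INR n + 1) * (PI / 2))) with (- sin (t + INR n * (PI/2)) * 1).
  2:{ replace (t + (INR n + 1) * (PI / 2)) with ((t + INR n * (PI/2)) + PI/2) by ring.
      rewrite cos_plus, cos_PI2, sin_PI2. ring. }
  apply (derivable_pt_lim_comp (fun t => t + INR n * (PI/2)) cos).
  - replace 1 with (1 + 0) by ring.
    apply (derivable_pt_lim_plus id (fct_cte (INR n * (PI/2)))).
    + apply derivable_pt_lim_id.
    + apply derivable_pt_lim_const.
  - apply derivable_pt_lim_cos.
Qed.

Definition cv (t : R) := (1 - cos t) / 2.
Lemma cv_in t : 0 <= cv t <= 1.
Proof. unfold cv. pose proof (COS_bound t). lra. Qed.
Definition cc (t : R) : I01 := exist _ (cv t) (cv_in t).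

Lemma cc_curve : curve_I cc.
Proof.
  exists (fun n t => match n with O => 1/2 + (-(1/2)) * ec 0 t | S m => 0 + (-(1/2)) * ec (S m) t end).
  split.
  - intros x. simpl. unfold ec, cv. simpl. rewrite Rmult_0_l, Rplus_0_r. field.
  - intros [|m] x.
    + replace (0 + - (1 / 2) * ec 1 x) with (- (1 / 2) * ec 1 x) by ring.
      apply affine_deriv, ec_deriv.
    + replace (0 + - (1 / 2) * ec (S (S m)) x) with (- (1 / 2) * ec (S (S m)) x) by ring.
      apply affine_deriv, ec_deriv.
Qed.

Lemma smooth_cont g a : smooth g -> continuity_pt g a.
Proof.
  intros [d [H0 H1]].
  apply lim_cont. intros eps Heps.
  destruct (cont_lim (d O) a (dlim_cont _ _ _ (H1 O a)) eps Heps) as [eta [He Hx]].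
  exists eta. split; auto. intros x Hxa. rewrite <- !H0. apply Hx. exact Hxa.
Qed.

Lemma cos_lt_1 t : 0 < t < PI -> cos t < 1.
Proof.
  intros H. pose proof (sin_gt_0 t (proj1 H) (proj2 H)).
  pose proof (sin2_cos2 t). pose proof (COS_bound t). unfold Rsqr in *. nra.
Qed.

Lemma cont_ext_ends (g : I01 -> R) : F_I g ->
  continuity_pt (ext g) 0 /\ continuity_pt (ext g) 1.
Proof.
  intros HF. pose proof (HF cc cc_curve) as Hs.
  set (G := fun t => g (cc t)) in Hs.
  assert (HG : forall t, G t = ext g (cv t)) by (intros t; unfold G; rewrite ext_proj; reflexivity).
  assert (P3 := PI2_3_2).
  split; apply lim_cont; intros eps Heps.
  - destruct (cont_lim G 0 (smooth_cont G 0 Hs) eps Heps) as [eta [He Hx]].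
    set (t0 := Rmin (eta/2) 1).
    assert (Ht0 : 0 < t0 <= eta/2) by (unfold t0; split; [apply Rmin_pos; lra| apply Rmin_l]).
    assert (Ht1 : t0 <= 1) by (unfold t0; apply Rmin_r).
    assert (Hx0 : 0 < cv t0) by (unfold cv; pose proof (cos_lt_1 t0); lra).
    exists (cv t0). split; auto. intros x Hxa. rewrite Rminus_0_r in Hxa.
    destruct (Rle_or_lt x 0) as [Hn|Hp].
    + rewrite (ext_left g x Hn), <- (ext_left g 0) by lra. rewrite Rminus_diag, Rabs_R0. lra.
    + rewrite Rabs_right in Hxa by lra.
      destruct (Ranalysis5.IVT_interv (fun t => cv t - x) 0 t0) as [t [Ht Hct]].
      * intros a _. apply continuity_pt_minus; [|apply continuity_pt_const; intros u v; reflexivity].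
        unfold cv. apply continuity_pt_div; [|apply continuity_pt_const; intros u v; reflexivity|lra].
        apply continuity_pt_minus; [apply continuity_pt_const; intros u v; reflexivity|apply continuity_cos].
      * lra.
      * unfold cv. rewrite cos_0. lra.
      * lra.
      * assert (E : x = cv t) by lra. rewrite E.
        assert (E0 : 0 = cv 0) by (unfold cv; rewrite cos_0; field).
        rewrite E0, <- !HG. apply Hx. rewrite Rminus_0_r, Rabs_right; lra.
  - destruct (cont_lim G PI (smooth_cont G PI Hs) eps Heps) as [eta [He Hx]].
    set (t0 := Rmin (eta/2) 1).
    assert (Ht0 : 0 < t0 <= eta/2) by (unfold t0; split; [apply Rmin_pos; lra| apply Rmin_l]).
    assert (Ht1 : t0 <= 1) by (unfold t0; apply Rmin_r).
    assert (Ec : cv (PI - t0) = (1 + cos t0)/2) by (unfold cv; rewrite cos_minus, cos_PI, sin_PI; field).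
    assert (Hx0 : cv (PI - t0) < 1) by (rewrite Ec; pose proof (cos_lt_1 t0); lra).
    exists (1 - cv (PI - t0)). split; [lra|]. intros x Hxa.
    destruct (Rle_or_lt 1 x) as [Hn|Hp].
    + rewrite (ext_right g x Hn), <- (ext_right g 1) by lra. rewrite Rminus_diag, Rabs_R0. lra.
    + rewrite Rabs_left in Hxa by lra.
      destruct (Ranalysis5.IVT_interv (fun t => cv t - x) (PI - t0) PI) as [t [Ht Hct]].
      * intros a _. apply continuity_pt_minus; [|apply continuity_pt_const; intros u v; reflexivity].
        unfold cv. apply continuity_pt_div; [|apply continuity_pt_const; intros u v; reflexivity|lra].
        apply continuity_pt_minus; [apply continuity_pt_const; intros u v; reflexivity|apply continuity_cos].
      * lra.
      * lra.
      * unfold cv. rewrite cos_PI. lra.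
      * assert (E : x = cv t) by lra. rewrite E.
        assert (E0 : 1 = cv PI) by (unfold cv; rewrite cos_PI; field).
        rewrite E0, <- !HG. apply Hx. rewrite Rabs_left1; lra.
Qed.

Section S.
Variable g : I01 -> R.
Variable dg : nat -> R -> R.
Hypothesis H0 : forall t, open01 t -> dg 0%nat t = ext g t.
Hypothesis H1 : forall n t, open01 t -> derivable_pt_lim (dg n) t (dg (S n) t).
Hypothesis H2 : forall n, (1 <= n)%nat -> limit1_in (dg n) open01 0 0 /\ limit1_in (dg n) open01 0 1.
Hypothesis HI : F_I g.

Definition D (n : nat) (x : R) : R :=
  match n with
  | O => ext g x
  | S m => if Rlt_dec 0 x then if Rlt_dec x 1 then dg (S m) x else 0 else 0
  end.

Lemma D_open n x : open01 x -> D n x = dg n x.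
Proof.
  intros Hx. destruct n as [|m]; simpl.
  - symmetry. apply H0, Hx.
  - destruct Hx. destruct (Rlt_dec 0 x); [|exfalso; lra]. destruct (Rlt_dec x 1); [reflexivity|exfalso; lra].
Qed.

Lemma D_out m x : ~ open01 x -> D (S m) x = 0.
Proof.
  intros Hx. simpl. destruct (Rlt_dec 0 x); [|reflexivity]. destruct (Rlt_dec x 1); [|reflexivity].
  exfalso. apply Hx. split; auto.
Qed.

Lemma D_left n : exists c, forall x, x <= 0 -> D n x = c.
Proof.
  destruct n as [|m].
  - eexists. intros x Hx. simpl. apply ext_left, Hx.
  - exists 0. intros x Hx. apply D_out. unfold open01. lra.
Qed.

Lemma D_right n : exists c, forall x, 1 <= x -> D n x = c.
Proof.
  destruct n as [|m].
  - eexists. intros x Hx. simpl. apply ext_right, Hx.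
  - exists 0. intros x Hx. apply D_out. unfold open01. lra.
Qed.

Lemma D_off n x : x <> 0 -> x <> 1 -> derivable_pt_lim (D n) x (D (S n) x).
Proof.
  intros Hx0 Hx1.
  destruct (Rlt_or_le x 0) as [Hn|Hp].
  - rewrite D_out by (unfold open01; lra).
    destruct (D_left n) as [c Hc]. apply (loc_const _ x c (-x)); [lra|].
    intros y Hy. apply Hc. apply Rabs_def2 in Hy. lra.
  - destruct (Rlt_or_le 1 x) as [Hg|Hl].
    + rewrite D_out by (unfold open01; lra).
      destruct (D_right n) as [c Hc]. apply (loc_const _ x c (x-1)); [lra|].
      intros y Hy. apply Hc. apply Rabs_def2 in Hy. lra.
    + assert (Ho : open01 x) by (unfold open01; lra).
      rewrite (D_open (S n) x Ho).
      apply (loc_deriv _ (dg n) x _ (Rmin x (1 - x))).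
      * apply Rmin_pos; lra.
      * intros y Hy. apply D_open. apply Rabs_def2 in Hy.
        pose proof (Rmin_l x (1-x)). pose proof (Rmin_r x (1-x)). unfold open01. lra.
      * apply H1, Ho.
Qed.

Lemma D_lim m a : (a = 0 \/ a = 1) ->
  forall eps, 0 < eps -> exists eta, 0 < eta /\ forall x, Rabs (x - a) < eta -> Rabs (D (S m) x) < eps.
Proof.
  intros Ha eps Heps.
  assert (Hl : limit1_in (dg (S m)) open01 0 a) by (destruct (H2 (S m)) as [Ha0 Ha1]; [lia|]; destruct Ha as [->| ->]; auto).
  destruct (Hl eps Heps) as [alp [Halp Hx]].
  exists alp. split; [lra|]. intros x Hxa.
  destruct (Rlt_dec 0 x) as [p|p]; [destruct (Rlt_dec x 1) as [q|q]|].
  - rewrite D_open by (split; auto).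
    specialize (Hx x (conj (conj p q) Hxa)). simpl in Hx. unfold R_dist in Hx. rewrite Rminus_0_r in Hx. exact Hx.
  - rewrite D_out by (unfold open01; intros [_ h]; auto). rewrite Rabs_R0. lra.
  - rewrite D_out by (unfold open01; intros [h _]; auto). rewrite Rabs_R0. lra.
Qed.

Lemma D_cont n a : (a = 0 \/ a = 1) -> continuity_pt (D n) a.
Proof.
  intros Ha. destruct n as [|m].
  - simpl. destruct (cont_ext_ends g HI). destruct Ha as [->| ->]; auto.
  - apply lim_cont. intros eps Heps. destruct (D_lim m a Ha eps Heps) as [eta [He Hx]].
    exists eta. split; auto. intros x Hxa. rewrite (D_out m a) by (unfold open01; lra).
    rewrite Rminus_0_r. apply Hx, Hxa.
Qed.

Lemma D_deriv n x : derivable_pt_lim (D n) x (D (S n) x).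
Proof.
  destruct (Req_dec x 0) as [E0|E0]; [|destruct (Req_dec x 1) as [E1|E1]; [|apply D_off; auto]].
  - subst x. rewrite D_out by (unfold open01; lra).
    apply (flat_point (D n) (D (S n)) 0 1); [lra| apply D_cont; auto| |].
    + intros y Hy. apply D_off.
      * intros ->. rewrite Rminus_0_r, Rabs_R0 in Hy. lra.
      * intros ->. rewrite Rminus_0_r, Rabs_R1 in Hy. lra.
    + intros eps Heps. destruct (D_lim n 0 (or_introl eq_refl) eps Heps) as [eta [He Hx]].
      exists eta. split; auto. intros y Hy. apply Hx, Hy.
  - subst x. rewrite D_out by (unfold open01; lra).
    apply (flat_point (D n) (D (S n)) 1 1); [lra| apply D_cont; auto| |].
    + intros y Hy. apply D_off.
      * intros ->. rewrite Rabs_minus_sym, Rminus_0_r, Rabs_R1 in Hy. lra.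
      * intros ->. rewrite Rminus_diag, Rabs_R0 in Hy. lra.
    + intros eps Heps. destruct (D_lim n 1 (or_intror eq_refl) eps Heps) as [eta [He Hx]].
      exists eta. split; auto. intros y Hy. apply Hx, Hy.
Qed.

End S.

Lemma gen_smooth_ext g : F_gen g -> smooth (ext g).
Proof.
  intros [HI [dg [H0 [H1 H2]]]].
  exists (D g dg). split.
  - intros x. reflexivity.
  - intros n x. apply D_deriv; auto.
Qed.

Lemma cont_zero F a : continuity_pt F a ->
  (forall eps, 0 < eps -> exists x, Rabs (x - a) < eps /\ F x = 0) -> F a = 0.
Proof.
  intros Hc Hz. destruct (Req_dec (F a) 0) as [E|E]; auto. exfalso.
  assert (Hp : 0 < Rabs (F a)) by (apply Rabs_pos_lt; auto).
  destruct (cont_lim F a Hc _ Hp) as [eta [He Hx]].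
  destruct (Hz eta He) as [x [Hxa Fx]]. specialize (Hx x Hxa).
  rewrite Fx, Rminus_0_l, Rabs_Ropp in Hx. lra.
Qed.

Lemma zero_limit F a D : continuity_pt F a -> F a = 0 -> limit1_in F D 0 a.
Proof.
  intros Hc Fa eps Heps. destruct (cont_lim F a Hc eps Heps) as [eta [He Hx]].
  exists eta. split; [lra|]. intros x [_ Hxa]. simpl in *. unfold R_dist in *.
  rewrite <- Fa. apply Hx, Hxa.
Qed.

Lemma cl_curveII : curve_II cl.
Proof.
  intros g Hg. destruct (gen_smooth_ext g Hg) as [d [Hd0 Hd1]].
  exists d. split; auto. intros x. rewrite cl_ext. apply Hd0.
Qed.

Theorem mainTheorem1 : forall f : I01 -> R, F_II f <-> F_gen f.
Proof.
  intros f. split.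
  - intros HII. split.
    + intros c Hc. apply HII. intros g [HgI _]. apply HgI. exact Hc.
    + destruct (HII cl cl_curveII) as [e [He0 He1]].
      assert (Hext : forall x, e 0%nat x = ext f x) by (intros x; rewrite He0; apply cl_ext).
      assert (ZL : forall n x, x < 0 -> e (S n) x = 0).
      { induction n as [|n IH]; intros x Hx.
        - apply (uniqueness_limite (e 0%nat) x); [apply He1|].
          apply (loc_const _ x (f (exist _ 0 (conj (Rle_refl 0) Rle_0_1))) (-x)); [lra|].
          intros y Hy. apply Rabs_def2 in Hy. rewrite Hext. apply ext_left. lra.
        - apply (uniqueness_limite (e (S n)) x); [apply He1|].
          apply (loc_const _ x 0 (-x)); [lra|].
          intros y Hy. apply Rabs_def2 in Hy. apply IH. lra. }
      assert (ZR : forall n x, 1 < x -> e (S n) x = 0).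
      { induction n as [|n IH]; intros x Hx.
        - apply (uniqueness_limite (e 0%nat) x); [apply He1|].
          apply (loc_const _ x (f (exist _ 1 (conj Rle_0_1 (Rle_refl 1)))) (x-1)); [lra|].
          intros y Hy. apply Rabs_def2 in Hy. rewrite Hext. apply ext_right. lra.
        - apply (uniqueness_limite (e (S n)) x); [apply He1|].
          apply (loc_const _ x 0 (x-1)); [lra|].
          intros y Hy. apply Rabs_def2 in Hy. apply IH. lra. }
      exists e. split; [intros t _; apply Hext|]. split; [intros n t _; apply He1|].
      intros [|m] Hm; [lia|].
      assert (Hc : forall a, continuity_pt (e (S m)) a) by (intros a; apply (dlim_cont _ _ _ (He1 (S m) a))).
      split; apply zero_limit; auto; apply cont_zero; auto; intros eps Heps.
      * exists (- (eps/2)). split; [|apply ZL; lra]. rewrite Rminus_0_r, Rabs_left; lra.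
      * exists (1 + eps/2). split; [|apply ZR; lra]. replace (1 + eps/2 - 1) with (eps/2) by ring.
        rewrite Rabs_right; lra.
  - intros Hg c Hc. apply Hc. exact Hg.
Qed.
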